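(* If $V=\langle v_1,\dots,v_\ell\rangle$ is a sequence of moves that can be applied (successively) to the distribution $\mu$, then $V\mu\preceq\bar V\mu$, where $\bar V=\langle\bar v_1,\dots,\bar v_\ell\rangle$ is the sequence of extreme moves on the same intervals.
   Context: A distribution is a finite set $\{(x_1,m_1),\dots,(x_k,m_k)\}$, $m_i>0$; $\mu(A)=\sum_{x_i\in A}m_i$; $M_j[\mu]=\sum_im_ix_i^j$. A move $v=([a,b],\delta)$ has $\delta$ a signed distribution on $[a,b]$ with $M_0[\delta]=M_1[\delta]=0$; it applies to $\mu$ if $\mu+\delta$ is a distribution, and $v\mu=\mu+\delta$; $V\mu$ denotes the result of applying $v_1,\dots,v_\ell$ in order. The extreme move $\bar v$ on $[a,b]$ maps any distribution $\mu$ to the distribution $\mu'$ with $\mu'\{a<x<b\}=0$, $\mu'(\{x\})=\mu(\{x\})$ for $x\notin[a,b]$, $M_0[\mu']=M_0[\mu]$, $M_1[\mu']=M_1[\mu]$. $\mu'$ is a basic split of $\mu$ if obtained by replacing one point mass $(x_i,m_i)$ by finitely many point masses of total mass $m_i$ and center of mass $x_i$; $\mu\preceq\mu'$ if $\mu'$ is obtained from $\mu$ by zero or more basic splits. *)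

(* Defs.v *)
From HB Require Import structures.
From mathcomp Require Import all_boot all_order all_algebra.
Set Implicit Arguments. Unset Strict Implicit. Unset Printing Implicit Defensive.
Import Order.TTheory GRing.Theory Num.Theory.
Local Open Scope ring_scope.

(* A (signed) distribution is represented by a finite list of point masses
   (x, m); repeated points add up.  Its semantics is the finite measure
   mu(A) = sum of the m with x in A. *)
Notation pmlist R := (seq (R * R)).

Section Dist.
Variable R : realFieldType.

Definition meas (s : pmlist R) (A : pred R) : R := \sum_(p <- s | A p.1) p.2.
Definition mass (s : pmlist R) (x : R) : R := meas s (pred1 x).
Definition mom (j : nat) (s : pmlist R) : R := \sum_(p <- s) p.2 * p.1 ^+ j.

Definition is_dist (s : pmlist R) : Prop := forall x, 0 <= mass s x.

Definition move := (R * R * pmlist R)%type.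
Definition mv_a (v : move) : R := v.1.1.
Definition mv_b (v : move) : R := v.1.2.
Definition mv_delta (v : move) : pmlist R := v.2.

Definition is_move (v : move) : Prop :=
  all (fun p => (mv_a v <= p.1) && (p.1 <= mv_b v)) (mv_delta v)
  /\ mom 0 (mv_delta v) = 0 /\ mom 1 (mv_delta v) = 0.

Definition apply_move (v : move) (mu : pmlist R) : pmlist R := mu ++ mv_delta v.

Fixpoint applies_seq (V : seq move) (mu : pmlist R) : Prop :=
  match V with
  | [::] => True
  | v :: V' => is_dist (apply_move v mu) /\ applies_seq V' (apply_move v mu)
  end.

Fixpoint apply_seq (V : seq move) (mu : pmlist R) : pmlist R :=
  match V with
  | [::] => mu
  | v :: V' => apply_seq V' (apply_move v mu)
  end.

Definition extreme_move (a b : R) (mu mu' : pmlist R) : Prop :=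
  [/\ is_dist mu',
      meas mu' (fun x => (a < x) && (x < b)) = 0,
      (forall x, ~~ ((a <= x) && (x <= b)) -> mass mu' x = mass mu x),
      mom 0 mu' = mom 0 mu &
      mom 1 mu' = mom 1 mu].

Fixpoint extreme_seq (I : seq (R * R)) (mu nu : pmlist R) : Prop :=
  match I with
  | [::] => nu = mu
  | (a, b) :: I' => exists mu', extreme_move a b mu mu' /\ extreme_seq I' mu' nu
  end.

Definition basic_split (mu mu' : pmlist R) : Prop :=
  exists x : R, 0 < mass mu x /\
  exists sigma : pmlist R,
    [/\ all (fun p => 0 < p.2) sigma,
        mom 0 sigma = mass mu x,
        mom 1 sigma = mass mu x * x &
        forall y, mass mu' y = (if y == x then 0 else mass mu y) + mass sigma y].

Inductive preceq : pmlist R -> pmlist R -> Prop :=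
| preceq_refl mu mu' : (forall x, mass mu x = mass mu' x) -> preceq mu mu'
| preceq_step mu mu1 mu2 : basic_split mu mu1 -> preceq mu1 mu2 -> preceq mu mu2.

End Dist.

(* Main.v *)
Require Import Defs.
From HB Require Import structures.
From mathcomp Require Import all_boot all_order all_algebra.
From Stdlib Require Import Ring Field.
Import Order.TTheory GRing.Theory Num.Theory.
Local Open Scope ring_scope.

Section Main.
Variable R : realFieldType.

Definition radd (x y : R) : R := x + y.
Definition rmul (x y : R) : R := x * y.
Definition ropp (x : R) : R := - x.
Definition rinv (x : R) : R := x^-1.
Definition rsub (x y : R) : R := radd x (ropp y).
Definition rdiv (x y : R) : R := rmul x (rinv y).
Definition rzero : R := 0.
Definition rone : R := 1.
Lemma RFth : field_theory rzero rone radd rmul rsub ropp rdiv rinv (@eq R).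
Proof.
split; first split; rewrite /rzero /rone /radd /rmul /rsub /ropp /rdiv /rinv.
- exact: add0r. - exact: addrC. - exact: addrA. - exact: mul1r. - exact: mulrC.
- exact: mulrA. - exact: mulrDl. - done. - exact: subrr.
- exact/eqP/oner_neq0. - done. - by move=> p /eqP; exact: mulVf.
Qed.
Add Field RField : RFth.
Lemma raddE (x y : R) : x + y = radd x y. Proof. by []. Qed.
Lemma rmulE (x y : R) : x * y = rmul x y. Proof. by []. Qed.
Lemma roppE (x : R) : - x = ropp x. Proof. by []. Qed.
Lemma rinvE (x : R) : x^-1 = rinv x. Proof. by []. Qed.
Lemma rzeroE : 0 = rzero :> R. Proof. by []. Qed.
Lemma roneE : 1 = rone :> R. Proof. by []. Qed.
Ltac rnorm := rewrite ?raddE ?rmulE ?roppE ?rinvE ?rzeroE ?roneE.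
Ltac rfix := match goal with |- ?x = ?y => change (@eq R x y) end.
Ltac rfield := rnorm; rfix; field.
Ltac rring := rnorm; rfix; ring.
Lemma neq0_r (x : R) : x != 0 -> rinv x = rinv x /\ ~ (x = rzero).
Proof. by move=> /eqP. Qed.

Implicit Types (s t mu nu : pmlist R) (F G : R -> R).

Definition sumw s F : R := \sum_(p <- s) p.2 * F p.1.
Definition ind (y : R) : R -> R := fun z => (z == y)%:R.

Lemma sumw_nil F : sumw [::] F = 0. Proof. by rewrite /sumw big_nil. Qed.
Lemma sumw_cons p s F : sumw (p :: s) F = p.2 * F p.1 + sumw s F.
Proof. by rewrite /sumw big_cons. Qed.
Lemma sumw_cat s t F : sumw (s ++ t) F = sumw s F + sumw t F.
Proof. by rewrite /sumw big_cat. Qed.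

Lemma massE s y : mass s y = sumw s (ind y).
Proof.
rewrite /mass /meas /sumw big_mkcond /=. apply: eq_bigr => p _.
by rewrite /ind; case: eqP => _; rewrite ?mulr1 ?mulr0.
Qed.
Lemma measE s (A : pred R) : meas s A = sumw s (fun z => (A z)%:R).
Proof.
rewrite /meas /sumw big_mkcond /=. apply: eq_bigr => p _.
by case: (A p.1); rewrite ?mulr1 ?mulr0.
Qed.
Lemma momE j s : mom j s = sumw s (fun z => z ^+ j). Proof. by []. Qed.

Lemma sumw_eq_in s F G : (forall p, p \in s -> F p.1 = G p.1) -> sumw s F = sumw s G.
Proof. move=> h; rewrite /sumw big_seq [RHS]big_seq; apply: eq_bigr => p ps; by rewrite h. Qed.
Lemma sumw_eqF s F G : (forall z, F z = G z) -> sumw s F = sumw s G.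
Proof. move=> h; apply: sumw_eq_in => p _; exact: h. Qed.
Lemma sumw_0 s : sumw s (fun _ => 0) = 0.
Proof. by rewrite /sumw big1 // => p _; rewrite mulr0. Qed.

Lemma sum_pred1 (l : seq R) (f : R -> R) x : uniq l ->
  \sum_(z <- l | z == x) f z = if x \in l then f x else 0.
Proof.
move=> ul; case: ifP => xl.
  rewrite big_mkcond (bigD1_seq x) //= eqxx big1 ?addr0 // => z zx.
  by rewrite (negbTE zx).
rewrite big_seq_cond big1 // => z /andP[zl /eqP zx]. by rewrite -zx zl in xl.
Qed.

Lemma sumw_group s F (l : seq R) : uniq l -> {subset [seq p.1 | p <- s] <= l} ->
  sumw s F = \sum_(z <- l) mass s z * F z.
Proof.
move=> ul; elim: s => [|p s IH] sub.
  rewrite sumw_nil; symmetry; apply: big1 => z _. by rewrite massE sumw_nil mul0r.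
rewrite sumw_cons IH; last by move=> z zs; apply: sub; rewrite inE zs orbT.
have pl : p.1 \in l by apply: sub; rewrite inE eqxx.
rewrite [RHS](eq_bigr (fun z => p.2 * ind z p.1 * F z + mass s z * F z)); last first.
  by move=> z _; rewrite massE sumw_cons -massE mulrDl.
rewrite big_split /=; congr (_ + _).
rewrite (bigD1_seq p.1) //= /ind eqxx mulr1 big1 ?addr0 // => z zp.
by rewrite eq_sym (negbTE zp) mulr0 mul0r.
Qed.

Definition meq s t := forall z, mass s z = mass t z.

Lemma sumw_meq s t F : meq s t -> sumw s F = sumw t F.
Proof.
move=> e. set l := undup [seq p.1 | p <- s ++ t].
have ul : uniq l by exact: undup_uniq.
rewrite (@sumw_group s F l ul); last by move=> z zs; rewrite mem_undup map_cat mem_cat zs.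
rewrite (@sumw_group t F l ul); last by move=> z zt; rewrite mem_undup map_cat mem_cat zt orbT.
by apply: eq_bigr => z _; rewrite e.
Qed.

Definition nonneg s := all (fun p => 0 <= p.2) s.

Lemma sumw_ge0 s F : is_dist s -> (forall z, 0 <= F z) -> 0 <= sumw s F.
Proof.
move=> d h. rewrite (@sumw_group s F (undup [seq p.1 | p <- s])) ?undup_uniq //;
  last by move=> z; rewrite mem_undup.
apply: sumr_ge0 => z _; exact: mulr_ge0.
Qed.
Lemma sumw_ge0n s F : nonneg s -> (forall z, 0 <= F z) -> 0 <= sumw s F.
Proof.
move=> /allP h hF. rewrite /sumw big_seq. apply: sumr_ge0 => p ps.
apply: mulr_ge0 => //. exact: h.
Qed.
Lemma ind_ge0 y z : 0 <= ind y z. Proof. by rewrite /ind ler0n. Qed.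
Lemma nonneg_dist s : nonneg s -> is_dist s.
Proof. move=> h z; rewrite massE; apply: sumw_ge0n => // w; exact: ind_ge0. Qed.
Lemma sumw_term s F x : is_dist s -> (forall z, 0 <= F z) -> mass s x * F x <= sumw s F.
Proof.
move=> d h. set l := undup (x :: [seq p.1 | p <- s]).
rewrite (@sumw_group s F l) ?undup_uniq //; last by move=> z zs; rewrite mem_undup inE zs orbT.
have xl : x \in l by rewrite mem_undup mem_head.
rewrite (bigD1_seq x) ?undup_uniq //=.
rewrite lerDl. apply: sumr_ge0 => z _; exact: mulr_ge0.
Qed.
Lemma sumw_le_in s F G : nonneg s -> (forall p, p \in s -> F p.1 <= G p.1) ->
  sumw s F <= sumw s G.
Proof.
move=> /allP h hF. rewrite /sumw big_seq [X in _ <= X]big_seq. apply: ler_sum => p ps.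
apply: ler_wpM2l; [exact: h | exact: hF].
Qed.

Lemma sumw_supp2 d F a b : a != b -> (forall z, z != a -> z != b -> mass d z = 0) ->
  sumw d F = mass d a * F a + mass d b * F b.
Proof.
move=> ab h.
set l := a :: b :: [seq z <- undup [seq p.1 | p <- d] | (z != a) && (z != b)].
have ul : uniq l.
  rewrite /l /= !inE !mem_filter !eqxx (negbTE ab) andbF /=.
  apply: filter_uniq. exact: undup_uniq.
rewrite (@sumw_group d F l ul); last first.
  move=> z zd; rewrite /l !inE mem_filter mem_undup zd andbT.
  by case: (z == a); case: (z == b).
rewrite /l !big_cons big_seq big1 ?addr0 // => z.
rewrite mem_filter => /andP[/andP[za zb] _]. by rewrite h // mul0r.
Qed.

Lemma sumw_supp1 d F a : (forall z, z != a -> mass d z = 0) ->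
  sumw d F = mass d a * F a.
Proof.
move=> h.
set l := a :: [seq z <- undup [seq p.1 | p <- d] | z != a].
have ul : uniq l.
  rewrite /l /= mem_filter eqxx /= filter_uniq //. exact: undup_uniq.
rewrite (@sumw_group d F l ul); last first.
  move=> z zd; rewrite /l !inE mem_filter mem_undup zd andbT.
  by case: (z == a).
rewrite /l !big_cons big_seq big1 ?addr0 // => z.
rewrite mem_filter => /andP[za _]. by rewrite h // mul0r.
Qed.

Definition scale (c : R) s : pmlist R := [seq (p.1, c * p.2) | p <- s].
Lemma sumw_scale c s F : sumw (scale c s) F = c * sumw s F.
Proof.
elim: s => [|p s IH]; first by rewrite /scale /= !sumw_nil mulr0.
rewrite /scale /= !sumw_cons -/(scale c s) IH /=. rring.
Qed.
Lemma nonneg_scale c s : 0 <= c -> nonneg s -> nonneg (scale c s).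
Proof.
move=> c0 /allP h; apply/allP => q /mapP [p ps ->] /=. apply: mulr_ge0 => //. exact: h.
Qed.
Lemma nonneg_cat s t : nonneg s -> nonneg t -> nonneg (s ++ t).
Proof. by rewrite /nonneg all_cat => -> ->. Qed.
Lemma nonneg_filter (P : pred (R * R)) s : nonneg s -> nonneg (filter P s).
Proof. move=> /allP h; apply/allP => p; rewrite mem_filter => /andP[_ ps]; exact: h. Qed.
Lemma sumw_filterC (P : pred (R * R)) s F :
  sumw (filter P s) F + sumw (filter (predC P) s) F = sumw s F.
Proof.
elim: s => [|p s IH]; first by rewrite /= !sumw_nil addr0.
rewrite /=; case: (P p) => /=; rewrite !sumw_cons -IH; rring.
Qed.
Definition posf s := [seq p <- s | 0 < p.2].
Lemma posf_pos s : all (fun p => 0 < p.2) (posf s).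
Proof. by apply/allP => p; rewrite mem_filter => /andP[]. Qed.
Lemma sumw_filterpos s F : nonneg s -> sumw (posf s) F = sumw s F.
Proof.
rewrite /posf; elim: s => [|p s IH] //= /andP[p0 h]. case: ifP => pp; rewrite ?sumw_cons IH //.
have -> : p.2 = 0 by apply/eqP; rewrite eq_le p0 andbT leNgt pp.
by rewrite mul0r add0r.
Qed.
Lemma sumw_affine s (al be : R) : sumw s (fun z => al + be * z) = al * mom 0 s + be * mom 1 s.
Proof.
elim: s => [|p s IH]; first by rewrite sumw_nil /mom !big_nil !mulr0 addr0.
rewrite sumw_cons IH !momE !sumw_cons -!momE expr0 expr1. rring.
Qed.

Lemma bsplit_meql mu mu' mu1 : meq mu mu' -> basic_split mu mu1 -> basic_split mu' mu1.
Proof.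
move=> e [x [hx [sg [h1 h2 h3 h4]]]]. exists x; split; first by rewrite -e.
exists sg; split => //; [by rewrite -e | by rewrite -e | by move=> y; rewrite h4 e].
Qed.
Lemma bsplit_meqr mu mu1 mu1' : meq mu1 mu1' -> basic_split mu mu1 -> basic_split mu mu1'.
Proof.
move=> e [x [hx [sg [h1 h2 h3 h4]]]]. exists x; split => //.
exists sg; split => // y; by rewrite -e h4.
Qed.
Lemma preceq_meql mu mu' nu : meq mu mu' -> preceq mu nu -> preceq mu' nu.
Proof.
move=> e h; case: h e => [m m' e2 | m m1 m2 bs p] e.
- by apply: preceq_refl => z; rewrite -e e2.
- apply: preceq_step p. exact: bsplit_meql bs.
Qed.
Lemma preceq_meqr mu nu nu' : meq nu nu' -> preceq mu nu -> preceq mu nu'.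
Proof.
move=> e h; elim: h nu' e => [m m' e2 | m m1 m2 bs p IH] nu' e.
- by apply: preceq_refl => z; rewrite e2 e.
- exact: preceq_step bs (IH _ e).
Qed.
Lemma preceq_trans (a b c : pmlist R) : preceq a b -> preceq b c -> preceq a c.
Proof.
elim=> [m m' e | m m1 m2 bs p IH] h.
- by apply: preceq_meql h => z; rewrite e.
- exact: preceq_step bs (IH h).
Qed.
Lemma pos_nonneg s : all (fun p => 0 < p.2) s -> nonneg s.
Proof. by move=> h; apply/allP => p ps; apply: ltW; exact: (allP h). Qed.
Lemma bsplit_dist mu mu1 : basic_split mu mu1 -> is_dist mu -> is_dist mu1.
Proof.
move=> [x [_ [sg [h1 _ _ h4]]]] d y. rewrite h4. apply: addr_ge0.
  by case: (y == x); last exact: d.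
apply: nonneg_dist; apply/allP => p ps; apply: ltW; exact: (allP h1 p ps).
Qed.
Lemma preceq_dist (a b : pmlist R) : preceq a b -> is_dist a -> is_dist b.
Proof.
elim=> [m m' e | m m1 m2 bs _ IH] d.
- by move=> z; rewrite -e; exact: d.
- apply: IH; exact: bsplit_dist bs d.
Qed.

Lemma mom0_ge0 s : nonneg s -> 0 <= mom 0 s.
Proof. move=> h; rewrite momE; apply: sumw_ge0n => // z; by rewrite expr0 ler01. Qed.

Lemma mass_le_mom0 s y : nonneg s -> mass s y <= mom 0 s.
Proof.
move=> h; rewrite massE momE; apply: sumw_le_in => // p _.
by rewrite expr0 /ind; case: (_ == _) => /=; rewrite ?ler01 ?lexx.
Qed.

Lemma family_preceq (fam : seq (R * pmlist R)) mu mu' :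
  (forall i, i \in fam -> nonneg i.2 /\ mom 1 i.2 = mom 0 i.2 * i.1) ->
  (forall x, \sum_(i <- fam | i.1 == x) mom 0 i.2 <= mass mu x) ->
  (forall y, mass mu' y = mass mu y - \sum_(i <- fam | i.1 == y) mom 0 i.2
                          + \sum_(i <- fam) mass i.2 y) ->
  preceq mu mu'.
Proof.
elim: fam mu => [|[x sg] fam IH] mu hf hb ht.
  by apply: preceq_refl => y; rewrite ht !big_nil subr0 addr0.
have [nn mm] := hf (x, sg) (mem_head _ _); rewrite /= in nn mm.
set w := mom 0 sg.
have w0 : 0 <= w by apply: mom0_ge0.
have rest0 : forall y, 0 <= \sum_(i <- fam | i.1 == y) mom 0 i.2.
  move=> y; rewrite big_seq_cond; apply: sumr_ge0 => i /andP[ifam _].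
  apply: mom0_ge0. by case: (hf i); first by rewrite inE ifam orbT.
have hbx := hb x; rewrite big_cons /= eqxx in hbx.
have wM : w <= mass mu x by apply: le_trans hbx; rewrite lerDl.
set mu1 := mu ++ (x, - w) :: sg.
have m1E : forall y, mass mu1 y = mass mu y - w * ind y x + mass sg y.
  move=> y; rewrite !massE sumw_cat sumw_cons /=. rring.
have h01 : preceq mu mu1.
  have Mge : 0 <= mass mu x by apply: le_trans wM.
  move: Mge; rewrite le_eqVlt => /orP[/eqP wm | M0].
  - have hw : w = 0.
      by apply/eqP; rewrite eq_le w0 andbT wm.
    apply: preceq_refl => y. rewrite m1E hw mul0r subr0.
    have : mass sg y = 0.
      apply/eqP; rewrite eq_le andbC.
      have -> : 0 <= mass sg y by apply: nonneg_dist.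
      by rewrite /= -hw; exact: mass_le_mom0.
    by move=> ->; rewrite addr0.
  -     apply: (@preceq_step _ mu mu1 mu1); last by apply: preceq_refl.
    exists x; split => //.
    pose sig0 : pmlist R := (x, mass mu x - w) :: sg.
    have nn2 : nonneg sig0 by rewrite /= subr_ge0 wM nn.
    exists (posf sig0); split.
    + exact: posf_pos.
    + rewrite momE (@sumw_filterpos sig0 (fun z => z ^+ 0) nn2) sumw_cons -momE /= expr0 -/w. rring.
    + rewrite momE (@sumw_filterpos sig0 (fun z => z ^+ 1) nn2) sumw_cons -momE /= expr1 mm -/w. rring.
    + move=> y; rewrite [mass (posf sig0) y]massE (@sumw_filterpos sig0 (ind y) nn2) sumw_cons -massE /= m1E /ind.
      by case: (eqVneq y x) => [->|ne]; rewrite /= ?mulr1n ?mulr0n ?mulr1 ?mulr0; rring.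
apply: preceq_trans h01 (IH mu1 _ _ _).
- by move=> i ifam; apply: hf; rewrite inE ifam orbT.
- move=> y. have := hb y; rewrite big_cons /= m1E => H.
  have sg0 : 0 <= mass sg y by apply: nonneg_dist.
  rewrite /ind; case: (eqVneq y x) => [e|ne].
  + subst y. rewrite eqxx /= mulr1n mulr1 -/w in H *.
    apply: ler_wpDr sg0 _; rewrite lerBrDl; exact: H.
  + rewrite eq_sym (negbTE ne) in H. rewrite /= mulr0n mulr0 subr0.
    exact: ler_wpDr sg0 H.
- move=> y; rewrite ht m1E big_cons /= big_cons /= /ind.
  by case: (eqVneq x y) => [<-|ne]; rewrite /= ?mulr1n ?mulr0n ?mulr1 ?mulr0 -/w; rring.
Qed.

Definition collF (a b : R) F (y : R) : R :=
  if (a < y) && (y < b) then (b - y) / (b - a) * F a + (y - a) / (b - a) * F b else F y.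
Definition coll1 (a b : R) (p : R * R) : pmlist R :=
  if (a < p.1) && (p.1 < b) then
    [:: (a, p.2 * ((b - p.1) / (b - a))); (b, p.2 * ((p.1 - a) / (b - a)))]
  else [:: p].
Definition coll (a b : R) s : pmlist R := flatten [seq coll1 a b p | p <- s].

Lemma sumw_coll a b s F : sumw (coll a b s) F = sumw s (collF a b F).
Proof.
elim: s => [|p s IH]; first by rewrite /coll /= !sumw_nil.
rewrite /coll /= sumw_cat -/(coll a b s) IH sumw_cons; congr (_ + _).
rewrite /coll1 /collF; case: ifP => _; rewrite !sumw_cons sumw_nil ?addr0 //= . rring.
Qed.

Lemma nonneg_coll a b s : a < b -> nonneg s -> nonneg (coll a b s).
Proof.
move=> ab; elim: s => [|p s IH] //= /andP[p0 h].
rewrite /coll /= -/(coll a b s); apply: nonneg_cat; last exact: IH.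
rewrite /coll1; case: ifP => /= [/andP[ap pb]|_]; last by rewrite p0.
have ba : 0 < b - a by rewrite subr_gt0.
by rewrite !mulr_ge0 ?invr_ge0 ?subr_ge0 ?(ltW ap) ?(ltW pb) ?(ltW ba) ?(ltW ab).
Qed.

Lemma coll_pts a b s p : a < b -> p \in coll a b s -> ~~ ((a < p.1) && (p.1 < b)).
Proof.
move=> ab; elim: s => [|q s IH] //=. rewrite mem_cat => /orP[|]; last exact: IH.
rewrite /coll1; case: ifP => [_|/negbT h]; last by rewrite inE => /eqP ->.
by rewrite !inE => /orP[] /eqP -> /=; rewrite ltxx // andbF.
Qed.

Definition norm s : pmlist R := [seq (z, mass s z) | z <- undup [seq p.1 | p <- s]].
Lemma sumw_norm s F : sumw (norm s) F = sumw s F.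
Proof.
rewrite /norm [LHS]/sumw big_map /=. symmetry.
by rewrite (@sumw_group s F (undup [seq p.1 | p <- s])) ?undup_uniq // => z; rewrite mem_undup.
Qed.
Lemma nonneg_norm s : is_dist s -> nonneg (norm s).
Proof. move=> d; apply/allP => p /mapP [z _ ->] /=; exact: d. Qed.

Definition E (a b : R) s := if a < b then coll a b (norm s) else s.
Lemma sumwE a b s F : a < b -> sumw (E a b s) F = sumw s (collF a b F).
Proof. by move=> ab; rewrite /E ab sumw_coll sumw_norm. Qed.

Lemma collF_ge0 a b F z : a < b -> (forall y, 0 <= F y) -> 0 <= collF a b F z.
Proof.
move=> ab h; rewrite /collF; case: ifP => // /andP[az zb].
have ba : 0 < b - a by rewrite subr_gt0.
by rewrite addr_ge0 // mulr_ge0 // divr_ge0 // subr_ge0 ltW.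
Qed.

Lemma collF_aff a b F z : a < b -> a <= z -> z <= b ->
  collF a b F z = (b * F a - a * F b) / (b - a) + (F b - F a) / (b - a) * z.
Proof.
move=> ab az zb. have ba : b - a <> rzero.
  by rewrite -rzeroE; apply/eqP; rewrite subr_eq0 gt_eqF.
rewrite /collF; case: ifP => [_|/negbT].
  move: ba; rnorm => ba; rfix; field; exact: ba.
rewrite negb_and -!leNgt => /orP[za|bz].
  have -> : z = a by apply/le_anti; rewrite za az.
  move: ba; rnorm => ba; rfix; field; exact: ba.
have -> : z = b by apply/le_anti; rewrite bz zb.
move: ba; rnorm => ba; rfix; field; exact: ba.
Qed.

Lemma E_extreme a b s : is_dist s -> extreme_move a b s (E a b s).
Proof.
move=> d. case: (boolP (a < b)) => ab; last first.
  rewrite /E (negbTE ab); split => //.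
  rewrite measE (@sumw_eqF _ _ (fun _ => 0)) ?sumw_0 // => z.
  case: (boolP ((a < z) && (z < b))) => // /andP[az zb].
  by move: ab; rewrite (lt_trans az zb).
have ba : b - a <> rzero.
  by rewrite -rzeroE; apply/eqP; rewrite subr_eq0 gt_eqF.
split.
- move=> y; rewrite massE sumwE //. apply: sumw_ge0 => // z.
  apply: collF_ge0 => // w; exact: ind_ge0.
- rewrite measE sumwE // (@sumw_eqF _ _ (fun _ => 0)) ?sumw_0 // => z.
  rewrite /collF; case: ifP => [_|->] //. by rewrite !ltxx /= andbF !mulr0 addr0.
- move=> x hx; rewrite !massE sumwE //. apply: sumw_eqF => z.
  rewrite /collF; case: ifP => // /andP[az zb].
  have hxa : (a == x) = false.
    by apply/negbTE; apply: contraNneq hx => <-; rewrite lexx ltW.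
  have hxb : (b == x) = false.
    by apply/negbTE; apply: contraNneq hx => <-; rewrite lexx ltW.
  have hxz : (z == x) = false.
    by apply/negbTE; apply: contraNneq hx => <-; rewrite !ltW.
  by rewrite /ind hxa hxb hxz !mulr0 addr0.
- rewrite !momE sumwE //. apply: sumw_eqF => z. rewrite /collF; case: ifP => // _.
  rewrite !expr0. move: ba; rnorm => ba; rfix; field; exact: ba.
- rewrite !momE sumwE //. apply: sumw_eqF => z. rewrite /collF; case: ifP => // _.
  rewrite !expr1. move: ba; rnorm => ba; rfix; field; exact: ba.
Qed.

Lemma mass_scale c s z : mass (scale c s) z = c * mass s z.
Proof. by rewrite !massE sumw_scale. Qed.
Lemma mass_cat s t z : mass (s ++ t) z = mass s z + mass t z.
Proof. by rewrite !massE sumw_cat. Qed.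

Lemma ext_open0 a b s m z : extreme_move a b s m -> a < z -> z < b -> mass m z = 0.
Proof.
move=> [d h0 _ _ _] az zb. apply/eqP; rewrite eq_le d andbT.
have := @sumw_term m (fun z => ((a < z) && (z < b))%:R) z d.
rewrite -measE h0 az zb /= mulr1n mulr1; apply => w; exact: ler0n.
Qed.

Lemma ext_uniq2 a b s m c : extreme_move a b s m -> extreme_move a b s c -> meq m c.
Proof.
move=> hm hc.
have [dm _ om m0 m1] := hm. have [dc _ oc c0 c1] := hc.
set dl := m ++ scale (-1) c.
have dlE : forall z, mass dl z = mass m z - mass c z.
  by move=> z; rewrite mass_cat mass_scale mulN1r.
have out0 : forall z, ~~ ((a <= z) && (z <= b)) -> mass dl z = 0.
  by move=> z hz; rewrite dlE om // oc // subrr.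
have mom0 : forall j, (j <= 1)%N -> mom j dl = 0.
  move=> j hj; rewrite !momE sumw_cat sumw_scale -!momE mulN1r.
  case: j hj => [_|[|//] _]; first by rewrite m0 c0 subrr.
  by rewrite m1 c1 subrr.
suff H : forall z, mass dl z = 0 by move=> z; apply/eqP; rewrite -subr_eq0 -dlE H.
case: (boolP (a < b)) => ab.
  have anb : a != b by rewrite lt_eqF.
  have in0 : forall z, z != a -> z != b -> mass dl z = 0.
    move=> z za zb. case: (boolP ((a <= z) && (z <= b))) => [/andP[az zb']|]; last exact: out0.
    have az' : a < z by rewrite lt_neqAle eq_sym za az.
    have zb'' : z < b by rewrite lt_neqAle zb zb'.
    by rewrite dlE (@ext_open0 a b s m z hm) // (@ext_open0 a b s c z hc) // subrr.
  have e0 := mom0 0%N isT; have e1 := mom0 1%N isT.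
  rewrite momE (@sumw_supp2 dl _ a b anb in0) !expr0 !mulr1 in e0.
  rewrite momE (@sumw_supp2 dl _ a b anb in0) !expr1 in e1.
  have hb : mass dl b * (b - a) = 0.
    have -> : mass dl b * (b - a) = (mass dl a * a + mass dl b * b) - a * (mass dl a + mass dl b) by rring.
    by rewrite e0 e1 mulr0 subr0.
  have hb0 : mass dl b = 0.
    by move/eqP: hb; rewrite mulf_eq0 subr_eq0 (gt_eqF ab) orbF => /eqP.
  have ha0 : mass dl a = 0 by move: e0; rewrite hb0 addr0.
  move=> z; case: (eqVneq z a) => [->//|za]; case: (eqVneq z b) => [->//|zb].
  exact: in0.
have in0 : forall z, z != a -> mass dl z = 0.
  move=> z za; apply: out0; apply: contra za => /andP[az zb].
  by rewrite eq_le az andbT (le_trans zb) // leNgt.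
have e0 := mom0 0%N isT.
rewrite momE (@sumw_supp1 dl _ a in0) !expr0 !mulr1 in e0.
move=> z; case: (eqVneq z a) => [->//|za]. exact: in0.
Qed.

Lemma ext_unique a b s m : is_dist s -> extreme_move a b s m -> meq m (E a b s).
Proof. move=> d h; exact: (@ext_uniq2 a b s m _ h (@E_extreme a b s d)). Qed.

Lemma E_meq a b s t : meq s t -> meq (E a b s) (E a b t).
Proof.
move=> e z; case: (boolP (a < b)) => ab; last by rewrite /E (negbTE ab); exact: e.
by rewrite !massE !sumwE // (@sumw_meq s t _ e).
Qed.

Lemma E_dist a b s : is_dist s -> is_dist (E a b s).
Proof. by move=> d; case: (@E_extreme a b s d). Qed.

Definition sig2 (a b m z : R) : pmlist R :=
  [:: (a, m * ((b - z) / (b - a))); (b, m * ((z - a) / (b - a)))].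

Lemma sig2_mom0 a b m z : a < b -> mom 0 (sig2 a b m z) = m.
Proof.
move=> ab. have ba : b - a <> rzero.
  by rewrite -rzeroE; apply/eqP; rewrite subr_eq0 gt_eqF.
rewrite momE /sig2 !sumw_cons sumw_nil /= !expr0.
move: ba; rnorm => ba; rfix; field; exact: ba.
Qed.
Lemma sig2_mom1 a b m z : a < b -> mom 1 (sig2 a b m z) = mom 0 (sig2 a b m z) * z.
Proof.
move=> ab; rewrite sig2_mom0 //. have ba : b - a <> rzero.
  by rewrite -rzeroE; apply/eqP; rewrite subr_eq0 gt_eqF.
rewrite momE /sig2 !sumw_cons sumw_nil /= !expr1.
move: ba; rnorm => ba; rfix; field; exact: ba.
Qed.
Lemma sig2_nonneg a b m z : a < b -> 0 <= m -> a <= z -> z <= b -> nonneg (sig2 a b m z).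
Proof.
move=> ab m0 az zb. have ab' := ltW ab.
by rewrite /nonneg /sig2 /= !mulr_ge0 // ?invr_ge0 ?subr_ge0.
Qed.
Lemma sig2_mass a b m z y : mass (sig2 a b m z) y =
  m * ((b - z) / (b - a)) * ind y a + m * ((z - a) / (b - a)) * ind y b.
Proof. by rewrite massE /sig2 !sumw_cons sumw_nil addr0. Qed.

Lemma L2 (v : move R) mu : is_move v -> is_dist mu -> is_dist (apply_move v mu) ->
  preceq (apply_move v mu) (E (mv_a v) (mv_b v) mu).
Proof.
case: v => [[a b] dl]; rewrite /is_move /apply_move /mv_a /mv_b /mv_delta /=.
move=> [hin [h0 h1]] dmu dt.
set t := mu ++ dl.
case: (boolP (a < b)) => ab; last first.
  rewrite /E (negbTE ab). apply: preceq_refl => z. rewrite mass_cat.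
  have pa : forall p, p \in dl -> p.1 = a.
    move=> p pdl; have /andP[ap pb] := allP hin p pdl.
    by apply/le_anti; rewrite ap andbT (le_trans pb) // leNgt.
  suff -> : mass dl z = 0 by rewrite addr0.
  rewrite massE. case: (eqVneq z a) => [->|za].
    rewrite -h0 momE; apply: sumw_eq_in => p pdl; by rewrite pa // /ind eqxx expr0.
  rewrite -(sumw_0 dl); apply: sumw_eq_in => p pdl.
  by rewrite pa // /ind eq_sym (negbTE za).
have dl0 : forall F, sumw dl (collF a b F) = 0.
  move=> F.
  rewrite (@sumw_eq_in dl _ (fun z => (b * F a - a * F b) / (b - a) + (F b - F a) / (b - a) * z)).
    by rewrite sumw_affine h0 h1 !mulr0 addr0.
  move=> p pdl; have /andP[ap pb] := allP hin p pdl; exact: collF_aff.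
have EE : forall y, mass (E a b mu) y = sumw t (collF a b (ind y)).
  by move=> y; rewrite massE sumwE // sumw_cat dl0 addr0.
set l := undup [seq p.1 | p <- t].
have ul : uniq l by exact: undup_uniq.
have sub : {subset [seq p.1 | p <- t] <= l} by move=> z; rewrite mem_undup.
pose P := fun z : R => (a < z) && (z < b).
pose fam := [seq (z, sig2 a b (mass t z) z) | z <- [seq z <- l | P z]].
apply: (@family_preceq fam).
- move=> i /mapP [z]; rewrite mem_filter => /andP[/andP[az zb] _] -> /=.
  split; last exact: sig2_mom1.
  apply: sig2_nonneg => //; exact: ltW.
- move=> x; rewrite big_map /=.
  rewrite (eq_bigr (fun z => mass t z)); last by move=> z _; rewrite sig2_mom0.
  rewrite sum_pred1 ?filter_uniq //. by case: ifP => _; [exact: lexx | exact: (dt x)].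
- move=> y. rewrite EE (@sumw_group t _ l ul sub) massE (@sumw_group t _ l ul sub).
  rewrite !big_map /= big_filter_cond big_filter.
  rewrite [X in _ = _ - X + _]big_mkcond [X in _ = _ + X]big_mkcond /=.
  rewrite -sumrB -big_split /=. apply: eq_bigr => z _.
  rewrite /P /collF; case: ifP => hz /=; last by rewrite subr0 addr0.
  rewrite sig2_mom0 // sig2_mass /ind.
  by case: (z == y); rewrite /= ?mulr1n ?mulr0n; rring.
Qed.

Lemma collF_pow a b j z : a < b -> (j <= 1)%N -> collF a b (fun w => w ^+ j) z = z ^+ j.
Proof.
move=> ab hj. have ba : b - a <> rzero.
  by rewrite -rzeroE; apply/eqP; rewrite subr_eq0 gt_eqF.
rewrite /collF; case: ifP => // _.
case: j hj => [_|[|//] _]; rewrite ?expr0 ?expr1;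
  move: ba; rnorm => ba; rfix; field; exact: ba.
Qed.
Lemma mom_coll a b j s : a < b -> (j <= 1)%N -> mom j (coll a b s) = mom j s.
Proof.
move=> ab hj; rewrite !momE sumw_coll; apply: sumw_eqF => z; exact: collF_pow.
Qed.
Lemma sumw_mulF s c F : sumw s (fun z => c * F z) = c * sumw s F.
Proof.
elim: s => [|p s IH]; first by rewrite !sumw_nil mulr0.
rewrite !sumw_cons IH; rring.
Qed.
Lemma mom_cat j s t : mom j (s ++ t) = mom j s + mom j t.
Proof. by rewrite !momE sumw_cat. Qed.
Lemma mom_scale j c s : mom j (scale c s) = c * mom j s.
Proof. by rewrite !momE sumw_scale. Qed.

Lemma L1 a b rho rho1 : is_dist rho -> basic_split rho rho1 ->
  preceq (E a b rho) (E a b rho1).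
Proof.
move=> d bs. have d1 := @bsplit_dist rho rho1 bs d.
case: (boolP (a < b)) => ab; last first.
  rewrite /E (negbTE ab). apply: (@preceq_step _ rho rho1 rho1) => //.
  exact: preceq_refl.
have ba : b - a <> rzero.
  by rewrite -rzeroE; apply/eqP; rewrite subr_eq0 gt_eqF.
move: bs => [x [mpos [sg [spos s0 s1 s4]]]].
pose m := mass rho x.
have nsg : nonneg sg by apply/allP => p ps; apply: ltW; exact: (allP spos p ps).
have split_sumw : forall F, sumw rho1 F = sumw rho F - m * F x + sumw sg F.
  move=> F.
  have e : meq rho1 (rho ++ (x, -m) :: sg).
    move=> y; rewrite s4 mass_cat [mass (_ :: sg) y]massE sumw_cons -massE /ind /m.
    by case: (eqVneq y x) => [->|ne]; rewrite /= ?mulr1n ?mulr0n; rring.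
  rewrite (@sumw_meq _ _ F e) sumw_cat sumw_cons /=; rring.
have Erho1 : forall y, mass (E a b rho1) y =
    mass (E a b rho) y - m * collF a b (ind y) x + mass (coll a b sg) y.
  by move=> y; rewrite !massE !sumwE // split_sumw sumw_coll.
have bound : forall y, m * collF a b (ind y) x <= mass (E a b rho) y.
  move=> y; rewrite massE sumwE //. apply: sumw_term => // z.
  apply: collF_ge0 => // w; exact: ind_ge0.
have Edist := @E_dist a b rho d.
pose T := coll a b sg.
have nT : nonneg T by apply: nonneg_coll.
have T0 : mom 0 T = m by rewrite mom_coll.
have T1 : mom 1 T = m * x by rewrite mom_coll.
case: (boolP ((a < x) && (x < b))) => hx.
2: { apply: (@family_preceq [:: (x, T)]).
  - by move=> i; rewrite inE => /eqP -> /=; rewrite T1 T0.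
  - move=> y; rewrite big_cons big_nil /=; case: ifP => [/eqP e|_]; last exact: Edist.
    subst y.
    rewrite addr0 T0. have := bound x. rewrite /collF (negbTE hx) /ind eqxx /= mulr1n mulr1.
    done.
  - move=> y; rewrite Erho1 !big_cons !big_nil /= T0 /collF (negbTE hx) /ind.
    by case: (eqVneq x y) => [<-|ne]; rewrite /T ?eqxx /= ?mulr1n ?mulr0n; rring. }
move: hx => /andP[ax xb].
pose p := m * ((b - x) / (b - a)).
pose q := m * ((x - a) / (b - a)).
have p0 : 0 <= p.
  apply: mulr_ge0; first exact: ltW.
  by apply: divr_ge0; rewrite subr_ge0 ltW.
have q0 : 0 <= q.
  apply: mulr_ge0; first exact: ltW.
  by apply: divr_ge0; rewrite subr_ge0 ltW.
have hpq : p + q = m by rewrite /p /q; move: ba; rnorm => ba; rfix; field; exact: ba.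
have hpqab : p * a + q * b = m * x by rewrite /p /q; move: ba; rnorm => ba; rfix; field; exact: ba.
pose TL := [seq r <- T | r.1 <= a].
pose TR := [seq r <- T | predC (fun r : R * R => r.1 <= a) r].
have nTL : nonneg TL by apply: nonneg_filter.
have nTR : nonneg TR by apply: nonneg_filter.
pose P := mom 0 TL. pose ML := mom 1 TL. pose Q := mom 0 TR. pose MR := mom 1 TR.
have hPQ : P + Q = m by rewrite /P /Q !momE sumw_filterC -momE T0.
have hM : ML + MR = m * x by rewrite /ML /MR !momE sumw_filterC -momE T1.
have P0 : 0 <= P by apply: mom0_ge0.
have Q0 : 0 <= Q by apply: mom0_ge0.
have hML : ML <= a * P.
  rewrite /ML /P !momE -sumw_mulF. apply: sumw_le_in => // r.
  rewrite mem_filter => /andP[ra _]; by rewrite expr1 expr0 mulr1.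
have hMR : b * Q <= MR.
  rewrite /MR /Q !momE -sumw_mulF. apply: sumw_le_in => // r.
  rewrite mem_filter => /andP[ra rT]. rewrite expr1 expr0 mulr1.
  have ra' : a < r.1 by rewrite ltNge; exact: ra.
  have := @coll_pts a b sg r ab rT. by rewrite ra' /= -leNgt.
pose K := P * MR - Q * ML.
have mpos' : 0 < m by [].
have hK2 : K + K = m * ((P * x - ML) + (MR - Q * x)).
  have -> : m * ((P * x - ML) + (MR - Q * x)) = (P - Q) * (m * x) + m * (MR - ML) by rring.
  rewrite -hM -hPQ /K; rring.
have Kpos : 0 < K.
  have h1 : P * (x - a) <= P * x - ML.
    rewrite mulrBr lerD2l lerN2 mulrC; exact: hML.
  have h2 : Q * (b - x) <= MR - Q * x.
    rewrite mulrBr lerD2r mulrC; exact: hMR.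
  have h3 : 0 < P * (x - a) + Q * (b - x).
    move: P0; rewrite le_eqVlt => /orP[/eqP eP|Ppos].
      rewrite -eP mul0r add0r. apply: mulr_gt0; last by rewrite subr_gt0.
      have -> : Q = m by rewrite -hPQ -eP add0r.
      done.
    apply: ltr_pwDl; first by apply: mulr_gt0 => //; rewrite subr_gt0.
    by apply: mulr_ge0 => //; rewrite subr_ge0 ltW.
  have hpos : 0 < K + K.
    rewrite hK2; apply: mulr_gt0 => //. apply: lt_le_trans h3 _. exact: lerD.
  case: (ltP 0 K) => // Kle. have := lerD Kle Kle; rewrite addr0 => H.
  by move: (lt_le_trans hpos H); rewrite ltxx.
have Kn0 : K <> rzero by move=> e; move: Kpos; rewrite e -rzeroE ltxx.
pose cLa := p * (MR - Q * a) / K. pose cLb := q * (MR - Q * b) / K.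
pose cRa := p * (P * a - ML) / K. pose cRb := q * (P * b - ML) / K.
have Kinv : 0 <= K^-1 by rewrite invr_ge0 ltW.
have aQ : a * Q <= b * Q by rewrite ler_wpM2r // ltW.
have aP : a * P <= b * P by rewrite ler_wpM2r // ltW.
have cLa0 : 0 <= cLa.
  apply: mulr_ge0 => //; apply: mulr_ge0 => //; rewrite subr_ge0 mulrC; exact: le_trans aQ hMR.
have cLb0 : 0 <= cLb.
  apply: mulr_ge0 => //; apply: mulr_ge0 => //; rewrite subr_ge0 mulrC; exact: hMR.
have cRa0 : 0 <= cRa.
  apply: mulr_ge0 => //; apply: mulr_ge0 => //; rewrite subr_ge0 mulrC; exact: hML.
have cRb0 : 0 <= cRb.
  apply: mulr_ge0 => //; apply: mulr_ge0 => //; rewrite subr_ge0 mulrC; exact: le_trans hML aP.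
pose sa := scale cLa TL ++ scale cRa TR.
pose sb := scale cLb TL ++ scale cRb TR.
have sa0 : mom 0 sa = p.
  rewrite /sa mom_cat !mom_scale -/P -/Q /cLa /cRa.
  move: Kn0; rewrite /K; rnorm => Kn0; rfix; field; exact: Kn0.
have sb0 : mom 0 sb = q.
  rewrite /sb mom_cat !mom_scale -/P -/Q /cLb /cRb.
  move: Kn0; rewrite /K; rnorm => Kn0; rfix; field; exact: Kn0.
have sa1 : mom 1 sa = mom 0 sa * a.
  rewrite sa0 /sa mom_cat !mom_scale -/ML -/MR /cLa /cRa.
  move: Kn0; rewrite /K; rnorm => Kn0; rfix; field; exact: Kn0.
have sb1 : mom 1 sb = mom 0 sb * b.
  rewrite sb0 /sb mom_cat !mom_scale -/ML -/MR /cLb /cRb.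
  move: Kn0; rewrite /K; rnorm => Kn0; rfix; field; exact: Kn0.
have eP : P = m - Q by rewrite -hPQ addrK.
have eML : ML = m * x - MR by rewrite -hM addrK.
have hLsum : cLa + cLb = 1.
  have numL : p * (MR - Q * a) + q * (MR - Q * b) = K.
    have -> : p * (MR - Q * a) + q * (MR - Q * b) = (p + q) * MR - Q * (p * a + q * b) by rring.
    rewrite hpq hpqab /K eP eML; rring.
  rewrite /cLa /cLb -mulrDl numL divff //; apply/eqP; exact: Kn0.
have hRsum : cRa + cRb = 1.
  have numR : p * (P * a - ML) + q * (P * b - ML) = K.
    have -> : p * (P * a - ML) + q * (P * b - ML) = P * (p * a + q * b) - (p + q) * ML by rring.
    rewrite hpq hpqab /K eML -hPQ; rring.
  rewrite /cRa /cRb -mulrDl numR divff //; apply/eqP; exact: Kn0.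
have hsum : forall y, \sum_(i <- [:: (a, sa); (b, sb)] | i.1 == y) mom 0 i.2 =
                      m * collF a b (ind y) x.
  move=> y; rewrite !big_cons big_nil /= sa0 sb0 /collF ax xb /= /ind /p /q.
  by case: (a == y); case: (b == y); rewrite /= ?mulr1n ?mulr0n; rring.
apply: (@family_preceq [:: (a, sa); (b, sb)]).
- move=> i; rewrite !inE => /orP[] /eqP -> /=; split => //.
  + by apply: nonneg_cat; apply: nonneg_scale.
  + by apply: nonneg_cat; apply: nonneg_scale.
- by move=> y; rewrite hsum.
- move=> y; rewrite Erho1 hsum !big_cons big_nil /= /sa /sb !mass_cat !mass_scale addr0.
  have -> : mass (coll a b sg) y = mass TL y + mass TR y.
    by rewrite !massE sumw_filterC.
  have eLb : cLb = 1 - cLa by rewrite -hLsum addrAC subrr add0r.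
  have eRb : cRb = 1 - cRa by rewrite -hRsum addrAC subrr add0r.
  rewrite eLb eRb; rring.
Qed.

Lemma meq_sym s t : meq s t -> meq t s.
Proof. by move=> e z; rewrite e. Qed.

Lemma mono1 a b rho rho' : is_dist rho -> preceq rho rho' -> preceq (E a b rho) (E a b rho').
Proof.
move=> d h; elim: h d => [m m' e | m m1 m2 bs p IH] d.
- apply: preceq_refl => z; exact: (@E_meq a b m m' e z).
- apply: preceq_trans (@L1 a b m m1 d bs) (IH (@bsplit_dist m m1 bs d)).
Qed.

Lemma mono_seq (I : seq (R * R)) rho rho' nu nu' : is_dist rho -> preceq rho rho' ->
  extreme_seq I rho nu -> extreme_seq I rho' nu' -> preceq nu nu'.
Proof.
elim: I rho rho' => [|[a b] I IH] rho rho' d h /= e1 e2.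
  by rewrite e1 e2.
move: e1 e2 => [m1 [h1 s1]] [m2 [h2 s2]].
have d' := @preceq_dist rho rho' h d.
have em1 := @ext_unique a b rho m1 d h1.
have em2 := @ext_unique a b rho' m2 d' h2.
apply: (IH m1 m2) => //; first by case: h1.
apply: (@preceq_meql (E a b rho)); first exact: meq_sym.
apply: (@preceq_meqr _ (E a b rho')); first exact: meq_sym.
exact: mono1.
Qed.

Lemma ext_exists (I : seq (R * R)) mu : is_dist mu -> exists nu, extreme_seq I mu nu.
Proof.
elim: I mu => [|[a b] I IH] mu d; first by exists mu.
have [nu h] := IH (E a b mu) (@E_dist a b mu d).
exists nu; exists (E a b mu); split => //; exact: E_extreme.
Qed.

Lemma main_aux (V : seq (move R)) mu : is_dist mu -> (forall v, v \in V -> is_move v) ->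
  applies_seq V mu ->
  forall nu, extreme_seq [seq (mv_a v, mv_b v) | v <- V] mu nu ->
     preceq (apply_seq V mu) nu.
Proof.
elim: V mu => [|v V IH] mu d hm ha nu /=.
  by move=> ->; apply: preceq_refl.
move=> [mu1 [h1 hs]]. move: ha => [dv hV].
have hmv : is_move v by apply: hm; rewrite inE eqxx.
have hmV : forall w, w \in V -> is_move w by move=> w wV; apply: hm; rewrite inE wV orbT.
have [nu0 h0] := @ext_exists [seq (mv_a v, mv_b v) | v <- V] _ dv.
have H1 := IH (apply_move v mu) dv hmV hV nu0 h0.
apply: preceq_trans H1 _.
apply: (@mono_seq [seq (mv_a v, mv_b v) | v <- V] (apply_move v mu) mu1 _ _ dv _ h0 hs).
apply: (@preceq_meqr _ (E (mv_a v) (mv_b v) mu)).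
  apply: meq_sym; exact: ext_unique.
exact: L2.
Qed.

End Main.

Theorem mainTheorem11 (R : realFieldType) (V : seq (move R)) (mu : seq (R * R)) :
  is_dist mu ->
  (forall v, v \in V -> is_move v) ->
  applies_seq V mu ->
  (exists nu, extreme_seq [seq (mv_a v, mv_b v) | v <- V] mu nu) /\
  (forall nu, extreme_seq [seq (mv_a v, mv_b v) | v <- V] mu nu ->
     preceq (apply_seq V mu) nu).
Proof.
move=> d hm ha; split; first exact: ext_exists.
exact: main_aux.
Qed.
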